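(* Let $q\equiv 3\pmod 4$ be a prime power. Suppose $E_0,E_1,E_2,E_3\subseteq\mathbb{F}_{q^2}$ satisfy $|E_i|=(q^2-q)/2$ for $i=0,1,2,3$, $\{E_0,E_1,E_2,E_3\}$ is a difference family of type $H$ in $(\mathbb{F}_{q^2},+)$, and in $\mathbb{Z}[(\mathbb{F}_{q^2},+)]$ $$E_0E_1^{(-1)}+E_1E_0^{(-1)}+E_2E_3^{(-1)}+E_3E_2^{(-1)}=(q-1)^2\,\mathbb{F}_{q^2}+2D_0-2D_2.$$ In $G=\mathbb{Z}_2\times(\mathbb{F}_{q^2},+)$ put $B_0=(\{0\}\times D_0)\cup(\{1\}\times(\mathbb{F}_{q^2}\setminus D_0))$, $B_1=(\{0\}\times D_2)\cup(\{1\}\times D_2)$, $B_2=(\{0\}\times E_0)\cup(\{1\}\times(\mathbb{F}_{q^2}\setminus E_1))$, $B_3=(\{0\}\times E_2)\cup(\{1\}\times(\mathbb{F}_{q^2}\setminus E_3))$. Then $\{B_0,B_1,B_2,B_3\}$ is a difference family with parameters $(2q^2;q^2,q^2-1,q^2,q^2;2q^2-2)$ in $G$.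
   Context: Let $\omega$ be a primitive element of $\mathbb{F}_{q^2}$, $C_i^{(N,q^2)}=\omega^i\langle\omega^N\rangle$ for $N\mid q^2-1$, and $D_i=C_i^{(4,q^2)}\cup C_{i+1}^{(4,q^2)}$. Subsets $X$ of an abelian group $G$ are identified with $\sum_{x\in X}x\in\mathbb{Z}[G]$, and $X^{(-1)}=\{-x:x\in X\}$. A collection $\{B_1,\dots,B_\ell\}$ of subsets of $G$ with $|B_i|=k_i$ is a difference family with parameters $(|G|;k_1,\dots,k_\ell;\lambda)$ if every nonzero element of $G$ occurs exactly $\lambda$ times among the differences $x-y$, $x,y\in B_i$, $x\ne y$, $i=1,\dots,\ell$; equivalently $\sum_i B_iB_i^{(-1)}=\lambda G+(\sum_i k_i-\lambda)\cdot 0_G$. A difference family with four blocks is of type $H$ if $\sum_{i=1}^4k_i-|G|=\lambda$. *)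

(* Defs.v *)
From HB Require Import structures.
From mathcomp Require Import all_boot all_order all_algebra all_field.
Set Implicit Arguments. Unset Strict Implicit. Unset Printing Implicit Defensive.
Import GRing.Theory.
Local Open Scope ring_scope.

(* Subsets of a finite abelian group V are {set V}.  The group-ring product
   X Y^(-1) has coefficient at g equal to the number of pairs (x,y) in X*Y
   with x - y = g. *)
Definition ndiff (V : finZmodType) (X Y : {set V}) (g : V) : nat :=
  #|[set p : V * V | [&& p.1 \in X, p.2 \in Y & p.1 - p.2 == g]]|.

Definition ndiff_distinct (V : finZmodType) (B : {set V}) (g : V) : nat :=
  #|[set p : V * V | [&& p.1 \in B, p.2 \in B, p.1 != p.2 & p.1 - p.2 == g]]|.

Definition diff_family_params (V : finZmodType) (Bs : seq {set V})
  (v : nat) (ks : seq nat) (lam : nat) : Prop :=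
  [/\ #|V| = v, map (fun B : {set V} => #|B|) Bs = ks &
      forall g : V, g != 0 -> (\sum_(B <- Bs) ndiff_distinct B g)%N = lam].

Definition diff_family_type_H (V : finZmodType) (Bs : seq {set V}) : Prop :=
  size Bs = 4%N /\
  exists lam : nat,
    diff_family_params Bs #|V| (map (fun B : {set V} => #|B|) Bs) lam /\
    (\sum_(B <- Bs) #|B|)%N = (#|V| + lam)%N.

Definition cyc4 (F : finFieldType) (w : F) (i : nat) : {set F} :=
  [set x : F | [exists j : 'I_#|F|, x == w ^+ (i + 4 * j)]].

Definition Dcl (F : finFieldType) (w : F) (i : nat) : {set F} :=
  cyc4 w i :|: cyc4 w i.+1.

Definition Z2F (F : finFieldType) : Type := ('Z_2 * F)%type.
HB.instance Definition _ (F : finFieldType) := GRing.Zmodule.on (Z2F F).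
HB.instance Definition _ (F : finFieldType) := Finite.on (Z2F F).

(* Main.v *)
Require Import Defs.
From HB Require Import structures.
From mathcomp Require Import all_boot all_order all_algebra all_field.
From mathcomp Require Import ring zify.
Import GRing.Theory.
Local Open Scope ring_scope.
Set Implicit Arguments. Unset Strict Implicit. Unset Printing Implicit Defensive.

Definition frob (F : ringType) (q : nat) (x : F) := x ^+ q.
Definition phq (F : ringType) (q : nat) (x : F) := x ^+ q.-1.

Section Key.
Variables (F : finFieldType) (q : nat).
Hypothesis hq1 : (1 < q)%N.
Hypothesis hqD : forall x y : F, (x + y) ^+ q = x ^+ q + y ^+ q.
Hypothesis hqq : forall x : F, x ^+ (q * q) = x.

Local Notation sg := (@frob F q).
Lemma sg0 : sg 0 = 0. Proof. by rewrite /frob expr0n; case: q hq1. Qed.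
Lemma sg1 : sg 1 = 1. Proof. by rewrite /frob expr1n. Qed.
Lemma sgD x y : sg (x + y) = sg x + sg y. Proof. exact: hqD. Qed.
Lemma sgN x : sg (- x) = - sg x.
Proof. by apply/eqP; rewrite -subr_eq0 opprK -sgD addNr sg0. Qed.
Lemma sgB x y : sg (x - y) = sg x - sg y. Proof. by rewrite sgD sgN. Qed.
Lemma sgM x y : sg (x * y) = sg x * sg y. Proof. exact: exprMn. Qed.
Lemma sgV x : sg (x^-1) = (sg x)^-1. Proof. exact: exprVn. Qed.
Lemma sgMd x y : sg (x / y) = sg x / sg y. Proof. by rewrite sgM sgV. Qed.

Local Notation phi := (@phq F q).
Lemma sgE x : sg x = phi x * x.
Proof. by rewrite /frob /phq -exprSr prednK // ltnW. Qed.

Lemma phi_sg x : x != 0 -> sg x = x -> phi x = 1.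
Proof. by move=> x0 h; apply: (mulIf x0); rewrite mul1r -sgE. Qed.

Lemma phiM x y : phi (x * y) = phi x * phi y. Proof. exact: exprMn. Qed.

Lemma phi_mu x : x != 0 -> phi x ^+ q.+1 = 1.
Proof.
move=> x0; rewrite /phq -exprM.
have : x ^+ (q.-1 * q.+1) * x = x.
  rewrite -exprSr -[RHS](hqq x); congr (_ ^+ _); case: q hq1 => // n _ /=.
  by rewrite mulSn mulnS; ring.
by move=> h; apply: (mulIf x0); rewrite mul1r.
Qed.

Lemma mu_sg s : s ^+ q.+1 = 1 -> sg s = s^-1.
Proof.
move=> h; have s0 : s != 0.
  by apply/eqP => s0; move: h; rewrite s0 expr0n /= => /eqP; rewrite eq_sym oner_eq0.
by apply: (mulIf s0); rewrite mulVf // /frob -exprSr.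
Qed.


Lemma phi_neq0 x : x != 0 -> phi x != 0.
Proof. by move=> x0; rewrite expf_neq0. Qed.

Lemma nf u : sg u != u ->
  [/\ u != 0, phi u != 1, phi (u - 1) != 1, phi u != phi (u - 1)
    & u = (1 - phi (u - 1)) / (phi u - phi (u - 1))].
Proof.
move=> hu.
have u0 : u != 0 by apply: contraNneq _ hu => ->; rewrite sg0.
have E1 : sg u = phi u * u by rewrite sgE.
have E2 : sg u - 1 = phi (u - 1) * (u - 1) by rewrite -sgE sgB sg1.
have s1 : phi u != 1 by apply: contraNneq _ hu => h1; rewrite E1 h1 mul1r.
have t1 : phi (u - 1) != 1.
  by apply: contraNneq _ hu => h1; move: E2; rewrite h1 mul1r => /addIr ->.
have st : phi u != phi (u - 1).
  by apply: contraNneq _ s1 => h1; move: E2; rewrite E1 -h1 mulrBr mulr1 => /addrI/oppr_inj <-.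
have stn : phi u - phi (u - 1) != 0 by rewrite subr_eq0.
split => //; apply: (mulIf stn); rewrite divfK //.
move: E2; rewrite E1 => E2.
have -> : u * (phi u - phi (u - 1)) = (phi u * u - 1) - phi (u - 1) * u + 1 by ring.
by rewrite E2; ring.
Qed.

Lemma nf_inv s t : s ^+ q.+1 = 1 -> t ^+ q.+1 = 1 -> s != 1 -> t != 1 -> s != t ->
  let u := (1 - t) / (s - t) in [/\ sg u != u, phi u = s & phi (u - 1) = t].
Proof.
move=> hs ht s1 t1 st u.
have s0 : s != 0 by apply/eqP => s0; move: hs; rewrite s0 expr0n /= => /eqP; rewrite eq_sym oner_eq0.
have t0 : t != 0 by apply/eqP => t0; move: ht; rewrite t0 expr0n /= => /eqP; rewrite eq_sym oner_eq0.
have stn : s - t != 0 by rewrite subr_eq0.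
have tsn : t + -1 * s != 0 by rewrite mulN1r subr_eq0 eq_sym.
have u0 : u != 0 by rewrite /u mulf_neq0 ?invr_eq0 // subr_eq0 eq_sym.
have u10 : u - 1 != 0.
  have -> : u - 1 = (1 - s) / (s - t) by rewrite /u; field; rewrite stn.
  by rewrite mulf_neq0 ?invr_eq0 // subr_eq0 eq_sym.
have Eu : sg u = s * u.
  rewrite /u sgMd sgB sgB sg1 (mu_sg hs) (mu_sg ht).
  by field; rewrite stn s0 t0 tsn.
have phiu : phi u = s by apply: (mulIf u0); rewrite -sgE Eu.
have Eu1 : sg (u - 1) = t * (u - 1).
  rewrite sgB sg1 Eu /u; field; by rewrite stn.
split => //.
  by apply: contra s1 => /eqP h; apply/eqP; apply: (mulIf u0); rewrite mul1r -Eu.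
by apply: (mulIf u10); rewrite -sgE Eu1.
Qed.


Lemma card_offdiag (X : {set F}) :
  #|[set st : F * F | (st.1 \in X) && (st.2 \in X) && (st.1 != st.2)]| = (#|X| * #|X|.-1)%N.
Proof.
have := cardsID [set st : F * F | st.1 == st.2] (setX X X).
rewrite cardsX.
have -> : setX X X :&: [set st : F * F | st.1 == st.2] = (fun x => (x, x)) @: X.
  apply/setP => [[a b]]; rewrite !inE /=; apply/idP/imsetP.
    by move=> /andP[/andP[aX bX] /eqP ab]; exists a => //; rewrite ab.
  by move=> [x xX [-> ->]]; rewrite xX eqxx.
have -> : setX X X :\: [set st : F * F | st.1 == st.2] =
   [set st : F * F | (st.1 \in X) && (st.2 \in X) && (st.1 != st.2)].
  by apply/setP => [[a b]]; rewrite !inE /= andbC.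
rewrite card_imset; last by move=> x y [].
case: #|X| => [|k] /=; lia.
Qed.

Lemma key (T : {set F}) (hT : forall s, s \in T -> s ^+ q.+1 = 1)
  (hfix : #|[set u : F | sg u == u]| = q) (h : F) (h0 : h != 0) :
  let S := [set x : F | (x != 0) && (phi x \in T)] in
  #|[set z in S | z + h \in S]| =
    ((h \in S) * (q - 2) + #|T :\ phi h| * (#|T :\ phi h|).-1)%N.
Proof.
move=> S.
pose A := [set u : F | (h * (u - 1) \in S) && (h * u \in S)].
pose Fix := [set u : F | sg u == u].
have memS x : (x \in S) = (x != 0) && (phi x \in T) by rewrite inE.
clearbody S.
have -> : [set z in S | z + h \in S] = (fun u => h * (u - 1)) @: A.
  apply/setP => z; rewrite inE; apply/idP/imsetP.
    move=> /andP[zS zhS]; exists (z / h + 1).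
      by rewrite inE addrK mulrC divfK // zS /= mulrDr mulr1 mulrC divfK.
    by rewrite addrK mulrC divfK.
  move=> [u]; rewrite inE => /andP[a b] ->; rewrite a /=.
  by rewrite mulrBr mulr1 subrK.
rewrite card_imset; last by move=> u v /(mulfI h0) /addIr.
rewrite -(cardsID Fix A).
have phih0 : phi h != 0 by apply: phi_neq0.
have fixS x u : x != 0 -> u \in Fix -> u != 0 -> (x * u \in S) = (x \in S).
  move=> x0; rewrite inE => /eqP fu u0.
  by rewrite !memS mulf_neq0 // x0 phiM (phi_sg u0 fu) mulr1.
have fix0 : 0 \in Fix by rewrite inE sg0.
have fix1 : 1 \in Fix by rewrite inE sg1.
have fixB u : u \in Fix -> u - 1 \in Fix.
  by rewrite !inE sgB sg1 => /eqP ->.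
congr (_ + _)%N.
  case hS: (h \in S).
    have -> : A :&: Fix = (Fix :\ 0) :\ 1.
      apply/setP => u; rewrite !inE.
      case fu: (sg u == u); rewrite ?andbF ?andbT //=.
      have uF : u \in Fix by rewrite inE fu.
      case: (eqVneq u 0) => [->|u0]; first by rewrite /= andbF mulr0 [0 \in S]memS eqxx /= andbF.
      case: (eqVneq u 1) => [->|u1]; first by rewrite subrr mulr0 [0 \in S]memS eqxx.
      rewrite (fixS _ _ h0 uF u0) (fixS _ _ h0 (fixB _ uF)) ?hS //.
      by rewrite subr_eq0.
    have := cardsD1 1 (Fix :\ 0); rewrite in_setD1 oner_neq0 fix1 /=.
    have := cardsD1 0 Fix; rewrite fix0 hfix /=.
    by rewrite mul1n => -> ->; rewrite addnA addKn.
  rewrite mul0n; apply/eqP; rewrite cards_eq0; apply/eqP/setP => u; rewrite !inE.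
  case fu: (sg u == u); rewrite ?andbF ?andbT //=.
  have uF : u \in Fix by rewrite inE fu.
  case: (eqVneq u 0) => [->|u0]; first by rewrite mulr0 [0 \in S]memS eqxx andbF.
  by rewrite (fixS _ _ h0 uF u0) hS andbF.
pose f u := (phi h * phi u, phi h * phi (u - 1)).
rewrite -card_offdiag -(@card_in_imset _ _ f).
  apply: eq_card => -[a b]; rewrite [in RHS]inE /=; apply/imsetP/idP.
    move=> [u]; rewrite !inE => /andP[nfu /andP[a1 a2]] [-> ->].
    have [u0 s1 t1 st _] := nf nfu.
    move: a1 a2; rewrite !memS !phiM => /andP[_ ->] /andP[_ ->].
    have ne1 x : (phi h * x != phi h) = (x != 1).
      by rewrite -{2}[phi h]mulr1 (inj_eq (mulfI phih0)).
    by rewrite !andbT !ne1 s1 t1 (inj_eq (mulfI phih0)) st.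
  rewrite !in_setD1 => /andP[/andP[/andP[ah aT] /andP[bh bT]] ab].
  have muh := phi_mu h0.
  set s := a / phi h; set t := b / phi h.
  have hs : s ^+ q.+1 = 1 by rewrite /s exprMn exprVn hT // muh invr1 mulr1.
  have ht : t ^+ q.+1 = 1 by rewrite /t exprMn exprVn hT // muh invr1 mulr1.
  have s1 : s != 1 by rewrite /s -[1](divff phih0) (inj_eq (mulIf _)) ?invr_eq0.
  have t1 : t != 1 by rewrite /t -[1](divff phih0) (inj_eq (mulIf _)) ?invr_eq0.
  have st : s != t by rewrite /s /t (inj_eq (mulIf _)) ?invr_eq0.
  have := nf_inv hs ht s1 t1 st; rewrite /=; move: ((1 - t) / (s - t)) => u [nfu pu pu1].
  have eA : phi h * s = a by rewrite /s mulrC divfK.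
  have eB : phi h * t = b by rewrite /t mulrC divfK.
  have [u0 _ _ _ _] := nf nfu.
  have u10 : u - 1 != 0.
    by apply: contraNneq nfu => /eqP; rewrite subr_eq0 => /eqP ->; rewrite sg1.
  exists u; last by rewrite /f pu pu1 eA eB.
  by rewrite !inE nfu /= !memS (mulf_neq0 h0 u0) (mulf_neq0 h0 u10) /= !phiM pu pu1 eA eB aT bT.
move=> u v; rewrite !inE => /andP[nfu _] /andP[nfv _] [e1 e2].
have [_ _ _ _ ->] := nf nfu; have [_ _ _ _ ->] := nf nfv.
by rewrite (mulfI phih0 e1) (mulfI phih0 e2).
Qed.

End Key.

Section Unity.
Variables (F : finFieldType) (d : nat) (z : F).
Hypothesis d0 : (0 < d)%N.
Hypothesis hz : d.-primitive_root z.

Lemma unity_card : #|[set x : F | x ^+ d == 1]| = d.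
Proof.
have -> : [set x : F | x ^+ d == 1] = (fun i : 'I_d => z ^+ i) @: [set: 'I_d].
  apply/setP => x; rewrite inE; apply/eqP/imsetP.
    by move=> /(prim_rootP hz) [i ->]; exists i.
  by move=> [i _ ->]; rewrite -exprM mulnC exprM (prim_expr_order hz) expr1n.
rewrite card_imset ?cardsT ?card_ord // => i j /eqP.
by rewrite (eq_prim_root_expr hz) !modn_small // => /eqP /val_inj.
Qed.

End Unity.

Section Cyc.
Variables (F : finFieldType) (q r : nat) (w : F).
Hypothesis hr : q = (4 * r + 3)%N.
Hypothesis hF : #|F| = (q ^ 2)%N.
Hypothesis hw : (#|F|.-1).-primitive_root w.
Hypothesis hqD : forall x y : F, (x + y) ^+ q = x ^+ q + y ^+ q.

Let NN := #|F|.-1.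
Lemma hN : (NN = q.-1 * q.+1)%N.
Proof. rewrite /NN hF hr /=; nia. Qed.
Lemma hFN : #|F| = NN.+1.
Proof. by rewrite /NN prednK // hF hr; nia. Qed.
Lemma N0 : (0 < NN)%N. Proof. rewrite hN hr /=; nia. Qed.

Lemma expN (x : F) : x != 0 -> x ^+ NN = 1.
Proof.
move=> x0; apply: (mulIf x0); rewrite mul1r -exprSr -hFN; exact: expf_card.
Qed.

Lemma hqq (x : F) : x ^+ (q * q) = x.
Proof. by rewrite mulnn -hF expf_card. Qed.

Lemma w0 : w != 0.
Proof.
apply/eqP => w0; have := prim_expr_order hw; rewrite -/NN w0 expr0n.
by case: NN N0 => // n _ /eqP; rewrite eq_sym oner_eq0.
Qed.

Lemma logP (x : F) : x != 0 -> exists e, x = w ^+ e.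
Proof. by move=> x0; have [i ->] := prim_rootP hw (expN x0); exists i. Qed.

Lemma dvd4 : (4 %| NN)%N.
Proof. by apply/dvdnP; exists ((4*r+2)*(r+1))%N; rewrite hN hr /=; nia. Qed.

Lemma mem_cyc e a : (a < 4)%N -> (w ^+ e \in cyc4 w a) = (e %% 4 == a)%N.
Proof.
move=> a4; rewrite inE; apply/existsP/eqP.
  move=> [j]; rewrite (eq_prim_root_expr hw) -/NN => /eqP E.
  rewrite -(div.modn_dvdm e dvd4) E (div.modn_dvdm _ dvd4).
  lia.
move=> ea; have lt : ((e %% NN) %/ 4 < #|F|)%N.
  rewrite hFN ltnS; apply: leq_trans (leq_div _ _) _; exact: ltnW (ltn_pmod _ N0).
have E : (a + 4 * ((e %% NN) %/ 4) = e %% NN)%N.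
  by rewrite [in RHS](divn_eq (e %% NN) 4) (div.modn_dvdm e dvd4) ea addnC mulnC.
by exists (Ordinal lt); rewrite (eq_prim_root_expr hw) -/NN /= E modn_mod.
Qed.


Lemma cyc0 a : 0 \notin cyc4 w a.
Proof.
rewrite inE; apply/existsP => -[j /eqP] /esym /eqP.
by rewrite expf_eq0 (negbTE w0) andbF.
Qed.

Lemma memD0 e : (w ^+ e \in Dcl w 0) = (e %% 4 < 2)%N.
Proof. rewrite in_setU !mem_cyc //; have := ltn_pmod e (isT : (0 < 4)%N); lia. Qed.

Lemma memD2 e : (w ^+ e \in Dcl w 2) = (2 <= e %% 4)%N.
Proof. rewrite in_setU !mem_cyc //; have := ltn_pmod e (isT : (0 < 4)%N); lia. Qed.

Lemma D0_0 : 0 \notin Dcl w 0.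
Proof. by rewrite in_setU negb_or !cyc0. Qed.

Lemma D2E x : (x \in Dcl w 2) = (x != 0) && (x \notin Dcl w 0).
Proof.
case: (eqVneq x 0) => [->|x0]; first by rewrite /=; apply/negbTE; rewrite in_setU negb_or !cyc0.
have [e ->] := logP x0; rewrite memD2 memD0 /=; lia.
Qed.

Lemma w2D x : (w ^+ 2 * x \in Dcl w 2) = (x \in Dcl w 0).
Proof.
case: (eqVneq x 0) => [->|x0]; first by rewrite mulr0 D2E eqxx (negbTE D0_0).
have [e ->] := logP x0; rewrite -exprD memD2 memD0; lia.
Qed.

Lemma cardD2 : #|Dcl w 2| = #|Dcl w 0|.
Proof.
  have -> : Dcl w 2 = (fun x => w ^+ 2 * x) @: Dcl w 0.
    apply/setP => x; apply/idP/imsetP.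
      move=> xD; exists ((w ^+ 2)^-1 * x); last by rewrite mulVKf ?expf_neq0 ?w0.
      by rewrite -w2D mulVKf ?expf_neq0 ?w0.
    by move=> [y yD ->]; rewrite w2D.
  by rewrite card_imset //; apply: mulfI; rewrite expf_neq0 ?w0.
Qed.

Lemma cardD0 : (#|Dcl w 0| * 2 = NN)%N.
Proof.
have e2 := cardD2.
have := cardsUI (Dcl w 0) (Dcl w 2).
have -> : Dcl w 0 :&: Dcl w 2 = set0.
  by apply/setP => x; rewrite in_setI D2E in_set0; case: (x \in Dcl w 0); rewrite ?andbF.
have -> : Dcl w 0 :|: Dcl w 2 = [set: F] :\ 0.
  apply/setP => x; rewrite in_setU D2E in_setD1 in_setT andbT.
  case: (eqVneq x 0) => [->|x0]; first by rewrite (negbTE D0_0).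
  by case: (x \in Dcl w 0).
have := cardsD1 0 [set: F]; rewrite cardsT in_setT hFN cards0 e2 add1n addn0 => -[<-].
lia.
Qed.


Lemma D02U : Dcl w 0 :|: Dcl w 2 = [set: F] :\ 0.
Proof.
apply/setP => x; rewrite in_setU D2E in_setD1 in_setT andbT.
case: (eqVneq x 0) => [->|x0]; first by rewrite (negbTE D0_0).
by case: (x \in Dcl w 0).
Qed.

Lemma qm0 : (0 < q.-1)%N. Proof. by rewrite hr addn3. Qed.
Lemma hq1c : (1 < q)%N. Proof. by rewrite hr addn3. Qed.

Lemma zm : q.-1.-primitive_root (w ^+ q.+1).
Proof.
have := @dvdn_prim_root _ _ _ hw q.-1; rewrite -/NN hN mulKn ?qm0 //.
by apply; apply: dvdn_mulr.
Qed.

Lemma zp : q.+1.-primitive_root (w ^+ q.-1).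
Proof.
have := @dvdn_prim_root _ _ _ hw q.+1; rewrite -/NN hN mulnK //.
by apply; apply: dvdn_mull.
Qed.

Lemma phi_same x y : x != 0 -> y != 0 -> phq q x = phq q y ->
  y \in Dcl w 0 -> x \in Dcl w 0.
Proof.
move=> x0 y0 e yD.
have : (x / y) ^+ q.-1 = 1.
  by rewrite exprMn exprVn; rewrite /phq in e; rewrite e divff // expf_neq0.
move=> /(prim_rootP zm) [[i /= _] hi].
have [k hk] := logP y0.
have -> : x = w ^+ (q.+1 * i + k) by rewrite exprD exprM -hi -hk divfK.
move: yD; rewrite hk !memD0.
have -> : (q.+1 * i = 4 * ((r + 1) * i))%N by rewrite hr mulnA; f_equal; lia.
by rewrite mulnC modnMDl.
Qed.

Lemma phi_sameE x y : x != 0 -> y != 0 -> phq q x = phq q y ->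
  (x \in Dcl w 0) = (y \in Dcl w 0).
Proof. by move=> x0 y0 e; apply/idP/idP; apply: phi_same. Qed.

Lemma img : phq q @: ([set: F] :\ 0) = [set s : F | s ^+ q.+1 == 1].
Proof.
apply/setP => s; apply/imsetP/idP.
  move=> [x]; rewrite in_setD1 => /andP[x0 _] ->.
  by rewrite inE /phq -exprM -hN expN.
rewrite inE => /eqP /(prim_rootP zp) [i ->]; exists (w ^+ i).
  by rewrite in_setD1 in_setT andbT expf_neq0 // w0.
by rewrite /phq -!exprM mulnC.
Qed.

Lemma cardT : #|phq q @: Dcl w 0| = (2 * r + 2)%N /\ #|phq q @: Dcl w 2| = (2 * r + 2)%N.
Proof.
have pw0 : phq q (w ^+ 2) != 0 by rewrite /phq !expf_neq0 // w0.
have e2 : phq q @: Dcl w 2 = (fun s => phq q (w ^+ 2) * s) @: (phq q @: Dcl w 0).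
  apply/setP => s; apply/imsetP/imsetP.
    move=> [y yD ->]; exists (phq q ((w ^+ 2)^-1 * y)).
      by apply: imset_f; rewrite -w2D mulVKf ?expf_neq0 ?w0.
    by rewrite /phq -exprMn mulVKf ?expf_neq0 ?w0.
  move=> [t /imsetP [z zD ->] ->]; exists (w ^+ 2 * z); first by rewrite w2D.
  by rewrite /phq -exprMn.
have c2 : #|phq q @: Dcl w 2| = #|phq q @: Dcl w 0|.
  by rewrite e2 card_imset //; apply: mulfI.
have := cardsUI (phq q @: Dcl w 0) (phq q @: Dcl w 2).
rewrite -imsetU D02U img (unity_card zp).
have -> : phq q @: Dcl w 0 :&: phq q @: Dcl w 2 = set0.
  apply/setP => s; rewrite in_setI in_set0; apply/negP => /andP[/imsetP [x xD ->] /imsetP [y yD e]].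
  have x0 : x != 0 by apply: contraNneq D0_0 => <-.
  have y0 : y != 0 by move: yD; rewrite D2E => /andP[].
  by move: yD; rewrite D2E (phi_sameE y0 x0 (esym e)) xD andbF.
rewrite cards0 addn0 c2 hr => E; split; lia.
Qed.

Lemma card_fix : #|[set u : F | frob q u == u]| = q.
Proof.
have -> : [set u : F | frob q u == u] = 0 |: [set x : F | x ^+ q.-1 == 1].
  apply/setP => u; rewrite in_setU1 !inE.
  case: (eqVneq u 0) => [->|u0]; first by rewrite /frob expr0n hr addn3 eqxx.
  by rewrite /frob -{1}(prednK (ltnW hq1c)) exprSr /= -[X in _ == X]mul1r (inj_eq (mulIf u0)).
rewrite cardsU1 (unity_card zm) inE expr0n.
have -> : (q.-1 == 0) = false by apply/negbTE; rewrite -lt0n qm0.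
by rewrite eq_sym oner_eq0 add1n prednK // ltnW // hq1c.
Qed.

Lemma cnt_gen (D : {set F}) (hD0 : 0 \notin D)
  (hcl : forall x y, x != 0 -> y != 0 -> phq q x = phq q y -> y \in D -> x \in D)
  (h : F) (h0 : h != 0) :
  #|[set z in D | z + h \in D]| =
  ((h \in D) * (q - 2) + (#|phq q @: D| - (h \in D)) * (#|phq q @: D| - (h \in D)).-1)%N.
Proof.
have nz : forall x, x \in D -> x != 0 by move=> x xD; apply/eqP => e; move: hD0; rewrite -e xD.
have SD : [set x : F | (x != 0) && (phq q x \in phq q @: D)] = D.
  apply/setP => x; rewrite inE; apply/andP/idP.
    by move=> [x0 /imsetP [y yD e]]; apply: hcl x0 (nz _ yD) e yD.
  move=> xD; split; [exact: nz | exact: imset_f].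
have hT : forall s, s \in phq q @: D -> s ^+ q.+1 = 1.
  move=> s /imsetP [y yD ->]; have y0 := nz _ yD.
  by rewrite /phq -exprM -hN expN.
have := @key F q hq1c hqD hqq (phq q @: D) hT card_fix h h0; cbv zeta; rewrite SD => ->.
have hm : (phq q h \in phq q @: D) = (h \in D).
  by rewrite -[in RHS]SD inE h0.
by rewrite [#|phq q @: D|](cardsD1 (phq q h)) hm addKn.
Qed.


Lemma cnt0 (h : F) : h != 0 ->
  #|[set z in Dcl w 0 | z + h \in Dcl w 0]| =
  ((h \in Dcl w 0) * (q - 2) + (2 * r + 2 - (h \in Dcl w 0)) * (2 * r + 2 - (h \in Dcl w 0)).-1)%N.
Proof.
move=> h0; rewrite (cnt_gen D0_0 _ h0) ?(proj1 cardT) //.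
by move=> x y x0 y0 e yD; apply: phi_same x0 y0 e yD.
Qed.

Lemma cnt2 (h : F) : h != 0 ->
  #|[set z in Dcl w 2 | z + h \in Dcl w 2]| =
  ((h \in Dcl w 2) * (q - 2) + (2 * r + 2 - (h \in Dcl w 2)) * (2 * r + 2 - (h \in Dcl w 2)).-1)%N.
Proof.
move=> h0; rewrite (cnt_gen _ _ h0) ?(proj2 cardT) //; first by rewrite D2E eqxx.
move=> x y x0 y0 e; rewrite !D2E x0 y0 /=; apply: contra => xD.
by rewrite -(phi_sameE x0 y0 e).
Qed.

End Cyc.

Lemma ndd (V : finZmodType) (B : {set V}) g : g != 0 ->
  ndiff_distinct B g = #|[set y in B | y + g \in B]|.
Proof.
move=> g0; rewrite /ndiff_distinct.
have -> : [set p : V * V | [&& p.1 \in B, p.2 \in B, p.1 != p.2 & p.1 - p.2 == g]] =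
    (fun y => (y + g, y)) @: [set y in B | y + g \in B].
  apply/setP => -[a b]; rewrite inE /=; apply/idP/imsetP.
    move=> /and4P[aB bB ab /eqP e]; exists b; first by rewrite inE bB -e addrC subrK.
    by rewrite -e addrC subrK.
  move=> [y]; rewrite inE => /andP[yB ygB] [-> ->]; rewrite ygB yB /= addrAC subrr add0r eqxx andbT.
  by rewrite -{2}[y]addr0 (inj_eq (addrI y)).
by rewrite card_imset // => y z [_ ->].
Qed.

Lemma ndiffE (V : finZmodType) (X Y : {set V}) h :
  ndiff X Y h = #|[set y in Y | y + h \in X]|.
Proof.
rewrite /ndiff.
have -> : [set p : V * V | [&& p.1 \in X, p.2 \in Y & p.1 - p.2 == h]] =
    (fun y => (y + h, y)) @: [set y in Y | y + h \in X].
  apply/setP => -[a b]; rewrite inE /=; apply/idP/imsetP.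
    move=> /and3P[aX bY /eqP e]; exists b; first by rewrite inE bY -e addrC subrK.
    by rewrite -e addrC subrK.
  by move=> [y]; rewrite inE => /andP[yY yhX] [-> ->]; rewrite yhX yY addrAC subrr add0r eqxx.
by rewrite card_imset // => y z [_ ->].
Qed.

Section G.
Variable F : finFieldType.
Definition mkB (X0 X1 : {set F}) : {set Z2F F} :=
  [set x : Z2F F | if x.1 == 0 then x.2 \in X0 else x.2 \in X1].

Lemma Z2_01 : ((0 : 'Z_2) == 1) = false. Proof. by []. Qed.
Lemma Z2_10 : ((1 : 'Z_2) == 0) = false. Proof. by []. Qed.
Lemma Z2_11 : (1 + 1 : 'Z_2) = 0. Proof. by apply: val_inj. Qed.

Lemma Z2_cases (c : 'Z_2) : c = 0 \/ c = 1.
Proof. by case: c => [[|[|//]]] i; [left|right]; apply: val_inj. Qed.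

Lemma cardZ2F : #|{: Z2F F}| = (2 * #|F|)%N.
Proof. by rewrite card_prod card_ord. Qed.

Lemma cardB X0 X1 : #|mkB X0 X1| = (#|X0| + #|X1|)%N.
Proof.
have -> : mkB X0 X1 = setX [set 0] X0 :|: setX [set 1] X1.
  apply/setP => -[c z]; rewrite !inE /=.
  by case: (Z2_cases c) => ->; rewrite ?eqxx ?Z2_01 ?Z2_10 /= ?orbF.
rewrite cardsU cardsX cardsX !cards1 !mul1n.
have -> : setX [set (0 : 'Z_2)] X0 :&: setX [set 1] X1 = set0.
  by apply/setP => -[c z]; rewrite !inE /=; case: (Z2_cases c) => ->; rewrite ?eqxx ?Z2_01 ?Z2_10 /= ?andbF.
by rewrite cards0 subn0.
Qed.

Definition cnt (X Y : {set F}) (h : F) := #|[set z in X | z + h \in Y]|.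

Lemma cntG0 X0 X1 h : h != 0 ->
  ndiff_distinct (mkB X0 X1) (0, h) = (cnt X0 X0 h + cnt X1 X1 h)%N.
Proof.
move=> h0; rewrite ndd; last first.
  by apply: contra h0 => /eqP [] ->.
rewrite -cardB; apply: eq_card => -[c z]; rewrite !inE /=.
by case: (Z2_cases c) => ->; rewrite ?eqxx ?Z2_01 ?Z2_10 /= ?addr0 ?inE.
Qed.

Lemma cntG1 X0 X1 h :
  ndiff_distinct (mkB X0 X1) (1, h) = (cnt X0 X1 h + cnt X1 X0 h)%N.
Proof.
rewrite ndd //.
rewrite -cardB; apply: eq_card => -[c z]; rewrite !inE /=.
by case: (Z2_cases c) => ->; rewrite ?eqxx ?Z2_01 ?Z2_10 ?Z2_11 ?add0r /= ?inE.
Qed.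

Lemma cntXX0 X : cnt X X 0 = #|X|.
Proof. by rewrite /cnt; apply: eq_card => z; rewrite !inE addr0 andbb. Qed.

Lemma cnt_c3 X Y h : (cnt X (~: Y) h + cnt X Y h = #|X|)%N.
Proof.
rewrite /cnt -(cardsID [set z | z + h \in Y] X) addnC; congr (_ + _).
  by apply: eq_card => z; rewrite !inE.
by apply: eq_card => z; rewrite !inE andbC.
Qed.

Lemma cnt_c4 X Y h : (cnt (~: X) Y h + cnt X Y h = #|Y|)%N.
Proof.
have cY : #|[set z | z + h \in Y]| = #|Y|.
  have -> : [set z | z + h \in Y] = (fun y => y - h) @: Y.
    apply/setP => z; rewrite inE; apply/idP/imsetP.
      by move=> zY; exists (z + h) => //; rewrite addrK.
    by move=> [y yY ->]; rewrite subrK.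
  by rewrite card_imset // => a b /addIr.
rewrite /cnt -cY -(cardsID X [set z | z + h \in Y]) addnC; congr (_ + _).
  by apply: eq_card => z; rewrite !inE andbC.
by apply: eq_card => z; rewrite !inE andbC.
Qed.

End G.

Lemma intconv (X a : nat) (b c : bool) :
  (X%:Z = a%:Z + 2 * b%:Z - 2 * c%:Z)%R -> (X + 2 * c = a + 2 * b)%N.
Proof.
move=> e; apply/eqP; rewrite -eqz_nat PoszD PoszD e; apply/eqP.
clear e; case: b; case: c => /=; ring.
Qed.

Lemma arb (b : bool) r :
  (b * (4 * r + 3 - 2) + (2 * r + 2 - b) * (2 * r + 2 - b).-1 = 4 * (r * r) + 6 * r + 2 - b)%N.
Proof.
case: b => /=.
  have -> : (2 * r + 2 - 1 = (2 * r).+1)%N by lia.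
  rewrite /= mul1n; have -> : (4 * r + 3 - 2 = 4 * r + 1)%N by lia.
  rewrite mulSn. lia.
rewrite mul0n add0n subn0 !addnS /= subn0 mulSn. lia.
Qed.

Unset Implicit Arguments.

Theorem proposition2p3 (F : finFieldType) (q : nat)
  (hq_pp : exists p k : nat, [/\ prime p, (0 < k)%N & q = (p ^ k)%N])
  (hq4 : (q %% 4 = 3)%N) (hF : #|F| = (q ^ 2)%N)
  (w : F) (hw : (#|F|.-1).-primitive_root w)
  (E0 E1 E2 E3 : {set F})
  (hE0 : #|E0| = ((q ^ 2 - q) %/ 2)%N) (hE1 : #|E1| = ((q ^ 2 - q) %/ 2)%N)
  (hE2 : #|E2| = ((q ^ 2 - q) %/ 2)%N) (hE3 : #|E3| = ((q ^ 2 - q) %/ 2)%N)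
  (hH : diff_family_type_H [:: E0; E1; E2; E3])
  (hgr : forall g : F,
     ((ndiff E0 E1 g + ndiff E1 E0 g + ndiff E2 E3 g + ndiff E3 E2 g)%N%:Z
      = ((q - 1) ^ 2)%N%:Z + 2 * (g \in Dcl w 0)%:Z - 2 * (g \in Dcl w 2)%:Z)%R) :
  let D0 := Dcl w 0 in
  let D2 := Dcl w 2 in
  let B0 := [set x : Z2F F | if x.1 == 0 then x.2 \in D0 else x.2 \notin D0] in
  let B1 := [set x : Z2F F | x.2 \in D2] in
  let B2 := [set x : Z2F F | if x.1 == 0 then x.2 \in E0 else x.2 \notin E1] in
  let B3 := [set x : Z2F F | if x.1 == 0 then x.2 \in E2 else x.2 \notin E3] in
  diff_family_params [:: B0; B1; B2; B3] (2 * q ^ 2)%N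
    [:: (q ^ 2)%N; (q ^ 2 - 1)%N; (q ^ 2)%N; (q ^ 2)%N] (2 * q ^ 2 - 2)%N.
Proof.
move=> D0 D2 B0 B1 B2 B3.
set r := (q %/ 4)%N.
have hr : q = (4 * r + 3)%N by rewrite {1}(divn_eq q 4) hq4 mulnC.
have hqD : forall x y : F, (x + y) ^+ q = x ^+ q + y ^+ q.
  case: hq_pp => p [k [pp k0 qe]].
  have pc : p \in [pchar F].
    by apply: (@card_finPcharP _ _ (k * 2)%N) => //; rewrite hF qe -expnM.
  by move=> x y; apply: exprDn_pchar; rewrite qe pnatX (pnatE _ pp) pc.
have eB0 : B0 = mkB D0 (~: D0) by apply/setP => x; rewrite !inE.
have eB1 : B1 = mkB D2 D2 by apply/setP => x; rewrite !inE; case: (x.1 == 0).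
have eB2 : B2 = mkB E0 (~: E1) by apply/setP => x; rewrite !inE.
have eB3 : B3 = mkB E2 (~: E3) by apply/setP => x; rewrite !inE.
have he : ((q ^ 2 - q) %/ 2 = (4 * r + 3) * (2 * r + 1))%N.
  have -> : (q ^ 2 - q = ((4 * r + 3) * (2 * r + 1)) * 2)%N by rewrite hr; nia.
  by rewrite mulnK.
have cD0 := cardD0 hr hF hw.
have cD2 := cardD2 hr hF hw.
have c0 := cnt0 hr hF hw hqD.
have c2 := cnt2 hr hF hw hqD.
have d2e := D2E hr hF hw.
have d00 := D0_0 hr hF hw.
rewrite -/D0 -/D2 in cD0 cD2 c0 c2 d2e d00 hgr.
clearbody D0 D2 B0 B1 B2 B3; subst B0 B1 B2 B3.
case: hH => _ [lam [[_ _ hlam] hsum]].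
move: hsum; rewrite !big_cons big_nil hE0 hE1 hE2 hE3 he => hsum.
have cF := cardsC (D0).
split.
- by rewrite cardZ2F hF.
- rewrite /= !cardB.
  have := cardsC E1; have := cardsC E3; rewrite hE1 hE3 he hF.
  have := cardsC D0; rewrite hF cD2.
  move: cD0; rewrite hF hr /= => *.
  rewrite hE0 hE2 he.
  f_equal; [lia | f_equal; [lia | f_equal; [lia|f_equal; lia]]].
move=> [a h] g0; rewrite !big_cons big_nil addn0.
have hn : ((4*r+3)^2 = 16*(r*r) + 24*r + 9)%N by ring.
have hm : ((4*r+3)*(2*r+1) = 8*(r*r) + 10*r + 3)%N by ring.
have cE1 := cardsC E1; have cE3 := cardsC E3.
rewrite hF hE1 hE3 he in cE1 cE3 cF.
move: cD0; rewrite hF => cD0.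
case: (Z2_cases a) => ea; subst a.
  have h0 : h != 0 by apply: contra g0 => /eqP ->.
  rewrite !cntG0 //.
  have hl := hlam h h0; rewrite !big_cons big_nil !ndd // in hl.
  rewrite -/(cnt E0 E0 h) -/(cnt E1 E1 h) -/(cnt E2 E2 h) -/(cnt E3 E3 h) in hl.
  have A0 := c0 h h0; rewrite -/(cnt D0 D0 h) hr arb in A0.
  have A2 := c2 h h0; rewrite -/(cnt D2 D2 h) hr arb d2e h0 /= in A2.
  have := cnt_c3 (~: D0) D0 h; have := cnt_c4 D0 D0 h.
  have := cnt_c3 (~: E1) E1 h; have := cnt_c4 E1 E1 h.
  have := cnt_c3 (~: E3) E3 h; have := cnt_c4 E3 E3 h.
  move: hl hsum cE1 cE3 cF cD0 A0 A2; rewrite hF hE1 hE3 he hr hn hm.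
  move: (r * r)%N => R; case: (h \in D0) => /=; lia.
have hq2 : ((4*r+3-1)^2 = 16*(r*r) + 16*r + 4)%N.
  have -> : (4*r+3-1 = 4*r+2)%N by lia.
  ring.
rewrite !cntG1.
have := intconv (hgr h); rewrite !ndiffE.
rewrite -/(cnt E1 E0 h) -/(cnt E0 E1 h) -/(cnt E3 E2 h) -/(cnt E2 E3 h).
have := cnt_c3 D0 D0 h; have := cnt_c4 D0 D0 h.
have := cnt_c3 E0 E1 h; have := cnt_c4 E1 E0 h.
have := cnt_c3 E2 E3 h; have := cnt_c4 E3 E2 h.
case: (eqVneq h 0) => [->|h0].
  rewrite !cntXX0 cD2 (negbTE d00) d2e eqxx /=.
  move: cD0; rewrite hE0 hE2 he hr hn hm hq2.
  move: (r * r)%N => R. set d := #|D0|. lia.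
have A0 := c0 h h0; rewrite -/(cnt D0 D0 h) hr arb in A0.
have A2 := c2 h h0; rewrite -/(cnt D2 D2 h) hr arb d2e h0 /= in A2.
rewrite d2e h0 /=.
move: cD0 A0 A2; rewrite hE0 hE2 he hr hn hm hq2.
move: (r * r)%N => R; set d := #|D0|; case: (h \in D0) => /=; lia.
Qed.
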